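(* Let $r,k,s_1,\dots,s_k$ be nonnegative integers, $\Gamma$ the complete bipartite supernova quiver with these parameters, and $\boldsymbol\mu=(\mu^1,\dots,\mu^k)$ a $k$-tuple of nonzero partitions, $\mu^i=(\mu^i_1\ge\cdots\ge\mu^i_{s_i+1}\ge0)$. Assume $k>1$ or $v_{(1;0)}>1$, where $\mathbf{v}_{\boldsymbol\mu}=(v_a)_{a\in I}$. Then $\mathbf{v}_{\boldsymbol\mu}\in M_\Gamma$ if and only if $r\geq|\mu^i|+\mu^i_1$ for all $i=1,\dots,k$.
   Context: $\Gamma$ has vertex set $I$ consisting of $(l)$, $l=1,\dots,r$, and $(i;j)$, $i=1,\dots,k$, $j=0,\dots,s_i$; its edges are: one edge between $(l)$ and $(i;0)$ for every $l,i$, and one edge between $(i;j)$ and $(i;j-1)$ for $1\le j\le s_i$. The dimension vector $\mathbf{v}_{\boldsymbol\mu}$: $v_{(l)}=1$, $v_{(i;0)}=|\mu^i|$, $v_{(i;j)}=|\mu^i|-\sum_{f=1}^j\mu^i_f$ for $1\le j\le s_i$. Let $(\cdot,\cdot)$ be the symmetric bilinear form on $\mathbb{Z}^I$ with $(\mathbf{e}_a,\mathbf{e}_a)=2$ and $(\mathbf{e}_a,\mathbf{e}_b)=-$(number of edges joining $a$ and $b$) for $a\neq b$. $M_\Gamma$ is the set of nonzero $\mathbf{u}\in\mathbb{Z}_{\ge0}^I$ with connected support such that $(\mathbf{e}_a,\mathbf{u})\le0$ for all $a\in I$. *)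

(* Defs.v *)
From HB Require Import structures.
From mathcomp Require Import all_boot all_order all_algebra.
Set Implicit Arguments. Unset Strict Implicit. Unset Printing Implicit Defensive.
Import Order.TTheory GRing.Theory Num.Theory.
Local Open Scope ring_scope.

(* Vertex (l), l = 1..r, is  inl l'  with l' : 'I_r  (l = l'+1);
   vertex (i;j), i = 1..k, j = 0..s_i, is  inr (Tagged _ j')  with tag i' : 'I_k
   (i = i'+1) and j' : 'I_(s i').+1 (j = j'). *)
Definition vert (r k : nat) (s : 'I_k -> nat) : finType :=
  ('I_r + {i : 'I_k & 'I_(s i).+1})%type.

Definition adj (r k : nat) (s : 'I_k -> nat) (a b : vert r s) : bool :=
  match a, b with
  | inl _, inr p => nat_of_ord (tagged p) == 0%N
  | inr p, inl _ => nat_of_ord (tagged p) == 0%N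
  | inr p, inr q =>
      (tag p == tag q) &&
      (((nat_of_ord (tagged p)).+1 == nat_of_ord (tagged q)) ||
       ((nat_of_ord (tagged q)).+1 == nat_of_ord (tagged p)))
  | inl _, inl _ => false
  end.

Definition cartan (r k : nat) (s : 'I_k -> nat) (a b : vert r s) : int :=
  if a == b then 2%:Z else - (adj a b)%:Z.

Definition bform (r k : nat) (s : 'I_k -> nat) (x y : vert r s -> int) : int :=
  (\sum_(a : vert r s) \sum_(b : vert r s) x a * y b * cartan a b)%R.

Definition basisv (r k : nat) (s : 'I_k -> nat) (a : vert r s) : vert r s -> int :=
  fun b => ((a == b) : nat)%:Z.

Definition connected_support (r k : nat) (s : 'I_k -> nat) (u : vert r s -> int) : Prop :=
  forall a b : vert r s, u a != 0%R -> u b != 0%R ->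
    connect (fun x y => [&& adj x y, u x != 0%R & u y != 0%R]) a b.

Definition in_M (r k : nat) (s : 'I_k -> nat) (u : vert r s -> int) : Prop :=
  [/\ forall a, (0 <= u a)%R,
      exists a, u a != 0%R,
      connected_support u &
      forall a, (bform (basisv a) u <= 0)%R].

(* partitions: mu i f is mu^{i+1}_f for f = 1 .. s_i + 1 (1-based) *)
Definition is_partition (n : nat) (m : nat -> nat) : Prop :=
  forall f, (1 <= f)%N -> (f < n.+1)%N -> (m f.+1 <= m f)%N.

Definition psize (n : nat) (m : nat -> nat) : nat := \sum_(1 <= f < n.+2) m f.

Definition vmu (r k : nat) (s : 'I_k -> nat) (mu : 'I_k -> nat -> nat)
    (a : vert r s) : int :=
  match a with
  | inl _ => 1%:Z
  | inr p => ((psize (s (tag p)) (mu (tag p)))%:Z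
              - (\sum_(1 <= f < (nat_of_ord (tagged p)).+1) mu (tag p) f)%:Z)%R
  end.

(* Main.v *)
Require Import Defs.
From HB Require Import structures.
From mathcomp Require Import all_boot all_order all_algebra.
From mathcomp Require Import zify.
Import Order.TTheory GRing.Theory Num.Theory.
Local Open Scope ring_scope.
Set Implicit Arguments. Unset Strict Implicit.

Lemma sum_vert r k (s : 'I_k -> nat) (F : vert r s -> int) :
  \sum_(a : vert r s) F a = \sum_(l < r) F (inl l) +
     \sum_(i < k) \sum_(j < (s i).+1) F (inr (Tagged (fun i0 => 'I_(s i0).+1) j)).
Proof.
rewrite /vert big_sumType; congr (_ + _).
rewrite (@sig_big_dep _ 0 +%R _ _ xpredT (fun _ => xpredT) (fun i (j : 'I_(s i).+1) => F (inr (Tagged (fun i0 => 'I_(s i0).+1) j)))) /=.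
by apply: eq_bigr => -[i j].
Qed.

Lemma sum_ind n d (F : nat -> int) :
  \sum_(j < n) (nat_of_ord j == d)%:R * F j = (d < n)%:R * F d.
Proof.
elim: n => [|n IH]; first by rewrite big_ord0 ltn0 mul0r.
rewrite big_ord_recr /= IH ltnS.
case: (ltngtP d n) => [h|h|->].
- by rewrite mul0r addr0.
- by rewrite !mul0r addr0.
- by rewrite mul0r add0r.
Qed.

Lemma PoszS (I : finType) (F : I -> nat) :
  Posz (\sum_(i : I) F i)%N = \sum_(i : I) (F i)%:Z.
Proof. by elim/big_rec2: _ => // i x y _ <-; rewrite PoszD. Qed.

Definition w k (s : 'I_k -> nat) (mu : 'I_k -> nat -> nat) (i : 'I_k) (n : nat) : nat :=
  (\sum_(n.+1 <= f < (s i).+2) mu i f)%N.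

Lemma w_big k (s : 'I_k -> nat) mu i n : (s i < n)%N -> w s mu i n = 0%N.
Proof. by move=> h; rewrite /w big_geq. Qed.

Lemma w_rec k (s : 'I_k -> nat) mu i n : (n <= s i)%N -> w s mu i n = (mu i n.+1 + w s mu i n.+1)%N.
Proof. by move=> h; rewrite /w big_ltn // !ltnS. Qed.

Lemma vmu_inr r k (s : 'I_k -> nat) mu i (j : 'I_(s i).+1) :
  vmu (r:=r) mu (inr (Tagged (fun i0 => 'I_(s i0).+1) j)) = (w s mu i j)%:Z.
Proof.
rewrite /vmu /= /psize (@big_cat_nat _ _ _ j.+1) //= ?ltnS; last first.
  by rewrite ltnW // ltnS ltn_ord.
rewrite /w PoszD; lia.
Qed.

Lemma adj_refl r k (s : 'I_k -> nat) (a : vert r s) : adj a a = false.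
Proof. by case: a => [l|[i j]] //=; rewrite eqxx /= orbb (gtn_eqF (ltnSn _)). Qed.

Lemma bform_basis r k (s : 'I_k -> nat) (a : vert r s) (u : vert r s -> int) :
  bform (basisv a) u = 2 * u a - \sum_b (adj a b)%:Z * u b.
Proof.
rewrite /bform (bigD1 a) //= [X in _ + X]big1 => [|c ca]; last first.
  by apply: big1 => b _; rewrite /basisv eq_sym (negbTE ca) !mul0r.
rewrite addr0 /basisv eqxx /= (bigD1 a) //= [X in _ - X](bigD1 a) //= adj_refl /cartan eqxx.
rewrite mul0r add0r mul1r.
have -> : \sum_(i | i != a) 1 * u i * (if a == i then 2%:Z else - (adj a i)%:Z)
   = - \sum_(i | i != a) (adj a i)%:Z * u i.
  rewrite -sumrN; apply: eq_bigr => b ba; rewrite eq_sym (negbTE ba) mul1r.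
  by rewrite mulrN mulrC.
by rewrite mulrC.
Qed.

Lemma sum_ind' n d (F : nat -> int) :
  \sum_(j < n) (nat_of_ord j == d)%:Z * F j = (d < n)%:Z * F d.
Proof.
elim: n => [|n IH]; first by rewrite big_ord0 ltn0 mul0r.
rewrite big_ord_recr /= IH ltnS.
case: (ltngtP d n) => [h|h|->].
- by rewrite mul0r addr0.
- by rewrite !mul0r addr0.
- by rewrite mul0r add0r.
Qed.

Lemma nbr_inl r k (s : 'I_k -> nat) mu (l : 'I_r) :
  \sum_b (adj (inl l) b)%:Z * vmu (r:=r) (s:=s) mu b = \sum_i (w s mu i 0)%:Z.
Proof.
rewrite sum_vert big1 ?add0r => [|l' _]; last by rewrite mul0r.
apply: eq_bigr => i _.
under eq_bigr => j _ do rewrite vmu_inr /=.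
by rewrite (sum_ind' _ _ (fun n => (w s mu i n)%:Z)) mul1r.
Qed.

Lemma nbr_inr r k (s : 'I_k -> nat) mu i (j : 'I_(s i).+1) :
  \sum_b (adj (inr (Tagged (fun i0 => 'I_(s i0).+1) j)) b)%:Z * vmu (r:=r) (s:=s) mu b
  = (if nat_of_ord j == 0%N then r else 0%N)%:Z + (w s mu i j.+1)%:Z
    + (if (0 < j)%N then w s mu i j.-1 else 0%N)%:Z.
Proof.
rewrite sum_vert -addrA; congr (_ + _).
  under eq_bigr => l _ do rewrite /= mulr1.
  rewrite sumr_const card_ord; case: eqP => _ /=; last by rewrite mul0rn.
  by rewrite natz.
rewrite (bigD1 i) // [X in _ + X = _]big1 ?addr0 => [|i' ii']; last first.
  by apply: big1 => j' _; rewrite /= eq_sym (negbTE ii') mul0r.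
under eq_bigr => j' _ do rewrite vmu_inr /= eqxx /=.
rewrite (eq_bigr (fun j' : 'I_(s i).+1 => (nat_of_ord j' == j.+1)%:Z * (w s mu i j')%:Z
     + ((j'.+1 == j))%:Z * (w s mu i j')%:Z)); last first.
  move=> j' _; rewrite -mulrDl; congr (_ * _).
  rewrite (eq_sym j.+1); case: eqP => [->|]; case: eqP => //=; lia.
rewrite big_split /= (sum_ind' _ _ (fun n => (w s mu i n)%:Z)) /=.
congr (_ + _).
  case: ltnP => h; first by rewrite mul1r.
  by rewrite w_big ?mulr0.
case: j => [[|n] hn] /=.
  by rewrite big1 // => j' _; rewrite mul0r.
rewrite (eq_bigr (fun j' : 'I_(s i).+1 => (nat_of_ord j' == n)%:Z * (w s mu i j')%:Z)) //.
by rewrite (sum_ind' _ _ (fun n => (w s mu i n)%:Z)) ltnW // mul1r.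
Qed.

Lemma adj_sym r k (s : 'I_k -> nat) (a b : vert r s) : adj a b = adj b a.
Proof. by case: a => [l|[i j]]; case: b => [l'|[i' j']] //=; rewrite eq_sym orbC. Qed.

Theorem lemma2p6 (r k : nat) (s : 'I_k -> nat) (mu : 'I_k -> nat -> nat)
  (hpart : forall i : 'I_k, is_partition (s i) (mu i))
  (hnz : forall i : 'I_k, (0 < psize (s i) (mu i))%N)
  (hkv : (1 < k)%N \/
         exists i : 'I_k, nat_of_ord i = 0%N /\
           (1 < vmu mu (inr (Tagged (fun i0 : 'I_k => 'I_(s i0).+1) (ord0 : 'I_(s i).+1)) : vert r s))%R) :
  in_M (vmu (r:=r) (s:=s) mu) <->
  (forall i : 'I_k, (psize (s i) (mu i) + mu i 1 <= r)%N).
Proof.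
have hnz' : forall i, (0 < w s mu i 0)%N := hnz.
split.
  case=> _ _ _ hb i.
  have := hb (inr (Tagged (fun i0 => 'I_(s i0).+1) (ord0 : 'I_(s i).+1))).
  rewrite bform_basis nbr_inr vmu_inr /=.
  rewrite -[psize _ _]/(w s mu i 0) (@w_rec _ s mu i 0 (leq0n _)); lia.
move=> H.
have kpos : (0 < k)%N.
  by case: hkv => [h|[i _]]; [lia| exact: (leq_ltn_trans (leq0n i) (ltn_ord i))].
pose i0 := Ordinal kpos.
have rpos : (0 < r)%N by have := H i0; have := hnz i0; lia.
pose l0 := Ordinal rpos.
split.
- by case=> [l|[i j]]; last rewrite vmu_inr.
- exists (inr (Tagged (fun i1 => 'I_(s i1).+1) (ord0 : 'I_(s i0).+1))).
  rewrite vmu_inr /=; have := hnz' i0; lia.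
- pose e := fun x y : vert r s => [&& adj x y, vmu mu x != 0 & vmu mu y != 0].
  have esym : symmetric e.
    move=> x y; rewrite /e adj_sym.
    by case: (vmu mu x != 0); case: (vmu mu y != 0); rewrite ?andbF ?andbT.
  have hc : forall a, vmu mu a != 0 -> connect e (inl l0) a.
    case=> [l|[i [n hn]]] hw.
      apply: (connect_trans (y := inr (Tagged (fun i1 => 'I_(s i1).+1) (ord0 : 'I_(s i0).+1))));
        apply: connect1; rewrite /e vmu_inr /=; have := hnz' i0; lia.
    move: hw; rewrite vmu_inr /=.
    elim: n hn => [|n IH] hn hw.
      apply: connect1; rewrite /e vmu_inr /=; have := hnz' i; lia.
    have hn' : (n < (s i).+1)%N by apply: ltnW.
    have hwn : w s mu i n = (mu i n.+1 + w s mu i n.+1)%N by apply: w_rec.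
    have hw' : (w s mu i n)%:Z != 0 by rewrite hwn; lia.
    apply: (connect_trans (IH hn' hw')); apply: connect1; rewrite /e !vmu_inr /= eqxx /= eqxx /=.
    by apply/andP; split.
  move=> a b ha hb; apply: (connect_trans (y := inl l0)).
    by rewrite (sym_connect_sym esym); exact: hc.
  exact: hc.
- case=> [l|[i [n hn]]]; rewrite bform_basis.
    rewrite nbr_inl /= -PoszS.
    case: hkv => [hk|[i [_ hi]]].
      pose i1 := Ordinal hk.
      have hne : i1 != i0 by [].
      rewrite (bigD1 i0) // (bigD1 i1) ?hne //=.
      have := hnz' i0; have := hnz' i1; lia.
    rewrite vmu_inr /= in hi.
    rewrite (bigD1 i) //=; lia.
  rewrite nbr_inr vmu_inr /=.
  have hp := hpart i.
  have H' := H i; rewrite -[psize _ _]/(w s mu i 0) in H'.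
  case: n hn => [|n] hn /=.
    rewrite (@w_rec _ s mu i 0 (leq0n _)) in H' *; lia.
  have h1 : (n <= s i)%N by lia.
  have h2 : (n.+1 <= s i)%N by lia.
  have h3 := hp n.+1 isT hn.
  rewrite (@w_rec _ s mu i n h1) (@w_rec _ s mu i n.+1 h2); lia.
Qed.
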